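(* Let $F=H_{(44/31,44/31,3)}:\mathbb{C}^2\to\mathbb{C}^2$ be the map $F(x,y)=\left(x^6+\frac{44}{31}y^3-y,\ y^6+\frac{44}{31}x^3-x\right)$. For $z=(z_1,z_2)\in\mathbb{C}^2$ (at which the matrix below is invertible) let $$M_{-1}(z)=\begin{bmatrix}6z_1^5 & \frac{132}{31}z_2^2-1\\ \frac{132}{31}z_1^2-1 & 6z_2^5\end{bmatrix}^{-1},$$ and for $k\in\{2,\dots,6\}$ let $$M_k(z)=\begin{bmatrix}\binom{6}{k}z_1^{6-k} & \frac{44}{31}\binom{3}{k}z_2^{3-k}\\ \frac{44}{31}\binom{3}{k}z_1^{3-k} & \binom{6}{k}z_2^{6-k}\end{bmatrix},$$ where $\binom{j}{i}=0$ when $i\notin\{0,\dots,j\}$. If $$\sigma\big(M_{-1}(z)M_k(z)\big)<\left(\frac{0.03}{|M_{-1}(z)F(z)|}\right)^{k-1}\quad\text{for all }k\in\{2,\dots,6\},$$ then $\alpha(F,z)<0.03$.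
   Context: For a square matrix $M$, $\sigma(M)$ denotes its largest singular value. For $v\in\mathbb{C}^N$, $|v|=\sqrt{|v_1|^2+\cdots+|v_N|^2}$, and for a multilinear map $\mathcal{L}:(\mathbb{C}^N)^k\to\mathbb{C}^N$, $|\mathcal{L}|=\max_{v^1,\dots,v^k\neq 0}\frac{|\mathcal{L}(v^1,\dots,v^k)|}{|v^1|\cdots|v^k|}$. For an analytic $F:\mathbb{C}^n\to\mathbb{C}^n$ with Jacobian $F'$ and $k$-th derivative $F^{(k)}$ (a symmetric $k$-linear map), Smale's invariants are $\beta(F,z)=|F'(z)^{-1}F(z)|$, $\gamma(F,z)=\sup_{k\ge2}\left|\frac{1}{k!}F'(z)^{-1}F^{(k)}(z)\right|^{1/(k-1)}$, and $\alpha(F,z)=\beta(F,z)\gamma(F,z)$. *)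

(* Defs.v *)
From HB Require Import structures.
From mathcomp Require Import all_boot all_order all_algebra.
From mathcomp Require Import classical_sets reals.
From mathcomp Require Import complex.
From mathcomp Require Import mpoly.

Set Implicit Arguments.
Unset Strict Implicit.
Unset Printing Implicit Defensive.

Import Order.TTheory GRing.Theory Num.Theory.
Local Open Scope ring_scope.
Local Open Scope classical_set_scope.

Section Smale.
Variable R : realType.
Local Notation C := (R[i]).

Definition vnorm (n : nat) (v : 'cV[C]_n) : R :=
  Num.sqrt (\sum_(i < n) (Normc.normc (v i ord0)) ^+ 2).

(* largest singular value = operator norm for the Euclidean norm *)
Definition sigma (n : nat) (M : 'M[C]_n) : R :=
  sup [set r | exists v : 'cV[C]_n, v != 0 /\ r = vnorm (M *m v) / vnorm v].

Definition mlnorm (n k : nat) (L : ('I_k -> 'cV[C]_n) -> 'cV[C]_n) : R :=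
  sup [set r | exists vs : 'I_k -> 'cV[C]_n,
    (forall l, vs l != 0) /\ r = vnorm (L vs) / \prod_(l < k) vnorm (vs l)].

Definition nroot (m : nat) (x : R) : R :=
  sup [set y | 0 <= y /\ y ^+ m <= x].

Definition polymap (n : nat) := 'I_n -> {mpoly C[n]}.

Definition pt (n : nat) (z : 'cV[C]_n) : 'I_n -> C := fun j => z j ord0.

Definition peval (n : nat) (F : polymap n) (z : 'cV[C]_n) : 'cV[C]_n :=
  \col_(i < n) (F i).@[pt z].

Definition jacobian (n : nat) (F : polymap n) (z : 'cV[C]_n) : 'M[C]_n :=
  \matrix_(i < n, j < n) ((F i)^`M(j)).@[pt z].

Definition mderivs (n : nat) (s : seq 'I_n) (p : {mpoly C[n]}) : {mpoly C[n]} :=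
  foldr (fun i q => q^`M(i)) p s.

Definition kderiv (n : nat) (F : polymap n) (k : nat) (z : 'cV[C]_n)
  (vs : 'I_k -> 'cV[C]_n) : 'cV[C]_n :=
  \col_(i < n) \sum_(js : {ffun 'I_k -> 'I_n})
     (mderivs [seq js l | l <- enum 'I_k] (F i)).@[pt z] *
     \prod_(l < k) vs l (js l) ord0.

Definition beta (n : nat) (F : polymap n) (z : 'cV[C]_n) : R :=
  vnorm (invmx (jacobian F z) *m peval F z).

Definition gamma (n : nat) (F : polymap n) (z : 'cV[C]_n) : R :=
  sup [set g | exists k : nat, (2 <= k)%N /\
    g = nroot k.-1 (mlnorm (fun vs : 'I_k -> 'cV[C]_n =>
          ((k`!)%:R : C)^-1 *: (invmx (jacobian F z) *m @kderiv n F k z vs)))].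

Definition alpha (n : nat) (F : polymap n) (z : 'cV[C]_n) : R :=
  beta F z * gamma F z.

Definition c4431 : C := 44%:R / 31%:R.

Definition Hmap : polymap 2 := fun i =>
  if i == ord0 then 'X_ord0 ^+ 6 + c4431 *: 'X_ord_max ^+ 3 - 'X_ord_max
  else 'X_ord_max ^+ 6 + c4431 *: 'X_ord0 ^+ 3 - 'X_ord0.

Definition mx22 (a b c d : C) : 'M[C]_2 :=
  \matrix_(i < 2, j < 2)
    (if i == ord0 then (if j == ord0 then a else b)
     else (if j == ord0 then c else d)).

(* the matrix whose inverse is M_{-1}(z) *)
Definition Jexpl (z : 'cV[C]_2) : 'M[C]_2 :=
  let z1 := z ord0 ord0 in let z2 := z ord_max ord0 in
  mx22 (6%:R * z1 ^+ 5) (132%:R / 31%:R * z2 ^+ 2 - 1)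
       (132%:R / 31%:R * z1 ^+ 2 - 1) (6%:R * z2 ^+ 5).

Definition Mk (k : nat) (z : 'cV[C]_2) : 'M[C]_2 :=
  let z1 := z ord0 ord0 in let z2 := z ord_max ord0 in
  mx22 ('C(6, k)%:R * z1 ^+ (6 - k)) (c4431 * 'C(3, k)%:R * z2 ^+ (3 - k))
       (c4431 * 'C(3, k)%:R * z1 ^+ (3 - k)) ('C(6, k)%:R * z2 ^+ (6 - k)).

End Smale.

(* Main.v *)
Require Import Defs.
From HB Require Import structures.
From mathcomp Require Import all_boot all_order all_algebra.
From mathcomp Require Import boolp classical_sets reals.
From mathcomp Require Import complex.
From mathcomp Require Import mpoly.
From mathcomp Require Import ring lra.
Import Order.TTheory GRing.Theory Num.Theory.
Local Open Scope ring_scope.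



Lemma dXU (K : comNzRingType) (n : nat) (i j : 'I_n) :
  ('X_i : {mpoly K[n]})^`M(j) = ((i == j)%:R : K) *: 1.
Proof.
rewrite mderivX mnm1E; case: eqP => [->|_]; last by rewrite !scale0r.
have -> : (U_(j) - U_(j))%MM = 0%MM by apply/mnmP => k; rewrite mnmBE mnm0E subnn.
by rewrite mpolyX0.
Qed.

Lemma dXn (K : comNzRingType) (n : nat) (i j : 'I_n) (m : nat) :
  ('X_i ^+ m : {mpoly K[n]})^`M(j) =
  if i == j then (m%:R : K) *: 'X_i ^+ m.-1 else 0.
Proof.
elim: m => [|m IH]; first by rewrite expr0 -mpolyC1 mderivC; case: eqP; rewrite ?scale0r.
rewrite exprS mderivM IH dXU; case: eqP => _; last by rewrite scale0r mul0r mulr0 addr0.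
rewrite scale1r mul1r -scalerAr /=; case: m {IH} => [|m] /=; first by rewrite scale0r addr0 expr0 scale1r.
by rewrite -exprS -[in RHS](addn1 m.+1) natrD addrC scalerDl scale1r.
Qed.

Lemma mderivsD (R : realType) (n : nat) (s : seq 'I_n) (p q : {mpoly R[i][n]}) :
  mderivs s (p + q) = mderivs s p + mderivs s q.
Proof. by elim: s => //= j s ->; rewrite mderivD. Qed.
Lemma mderivsB (R : realType) (n : nat) (s : seq 'I_n) (p q : {mpoly R[i][n]}) :
  mderivs s (p - q) = mderivs s p - mderivs s q.
Proof. by elim: s => //= j s ->; rewrite mderivB. Qed.
Lemma mderivsZ (R : realType) (n : nat) (s : seq 'I_n) c (p : {mpoly R[i][n]}) :
  mderivs s (c *: p) = c *: mderivs s p.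
Proof. by elim: s => //= j s ->; rewrite mderivZ. Qed.
Lemma mderivs0 (R : realType) (n : nat) (s : seq 'I_n) :
  mderivs s (0 : {mpoly R[i][n]}) = 0.
Proof. by elim: s => //= j s ->; rewrite mderiv0. Qed.

Lemma mderivsXn (R : realType) (n : nat) (s : seq 'I_n) (i : 'I_n) (e : nat) :
  mderivs s ('X_i ^+ e : {mpoly R[i][n]}) =
  if all (pred1 i) s then ((e ^_ size s)%:R : R[i]) *: 'X_i ^+ (e - size s) else 0.
Proof.
elim: s => [|j s IH] /=; first by rewrite ffactn0 subn0 scale1r.
rewrite IH; case: (all _ s); rewrite ?andbT ?andbF ?mderiv0 //.
rewrite mderivZ dXn eq_sym; case: eqP => _; last by rewrite scaler0.
by rewrite scalerA -natrM -ffactnSr subnS.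
Qed.

Lemma mevalXn (R : realType) (n : nat) (v : 'I_n -> R[i]) (i : 'I_n) (e : nat) :
  ('X_i ^+ e : {mpoly R[i][n]}).@[v] = v i ^+ e.
Proof. by elim: e => [|e IH]; rewrite ?expr0 ?meval1 // !exprS mevalM IH mevalXU. Qed.

Lemma mevalZXn (R : realType) (n : nat) (v : 'I_n -> R[i]) (c : R[i]) (i : 'I_n) (e : nat) :
  (c *: 'X_i ^+ e : {mpoly R[i][n]}).@[v] = c * v i ^+ e.
Proof. by rewrite mevalZ mevalXn. Qed.


Lemma mevalif (R : realType) (n : nat) (v : 'I_n -> R[i]) (b : bool) (c : R[i]) (i : 'I_n) (e : nat) :
  (if b then c *: 'X_i ^+ e else 0 : {mpoly R[i][n]}).@[v] = if b then c * v i ^+ e else 0.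
Proof. by case: b; rewrite ?meval0 // mevalZXn. Qed.

Lemma evalgen (R : realType) (n : nat) (v : 'I_n -> R[i]) (b1 b2 : bool) (a c d k : R[i])
  (i j : 'I_n) (e1 e2 e3 : nat) :
  ((if b1 then a *: 'X_i ^+ e1 else 0) + k *: (if b2 then c *: 'X_j ^+ e2 else 0)
    - (if b2 then d *: 'X_j ^+ e3 else 0) : {mpoly R[i][n]}).@[v] =
  (if b1 then a * v i ^+ e1 else 0) + (if b2 then k * c * v j ^+ e2 - d * v j ^+ e3 else 0).
Proof.
rewrite mevalB mevalD mevalZ !mevalif.
by case: b1; case: b2; rewrite ?mulr0 ?addr0 ?add0r ?subr0 ?mulrA ?oppr0 // addrA.
Qed.

Lemma evalH0 (R : realType) (s : seq 'I_2) (z : 'cV[R[i]]_2) :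
  (mderivs s (@Hmap R ord0)).@[pt z] =
  (if all (pred1 ord0) s then (6 ^_ size s)%:R * z ord0 ord0 ^+ (6 - size s) else 0) +
  (if all (pred1 ord_max) s then @c4431 R * (3 ^_ size s)%:R * z ord_max ord0 ^+ (3 - size s)
        - (1 ^_ size s)%:R * z ord_max ord0 ^+ (1 - size s) else 0).
Proof.
rewrite /Hmap eqxx -[X in _ - X]expr1 mderivsB mderivsD mderivsZ !mderivsXn.
exact: evalgen.
Qed.

Lemma evalH1 (R : realType) (s : seq 'I_2) (z : 'cV[R[i]]_2) :
  (mderivs s (@Hmap R ord_max)).@[pt z] =
  (if all (pred1 ord_max) s then (6 ^_ size s)%:R * z ord_max ord0 ^+ (6 - size s) else 0) +
  (if all (pred1 ord0) s then @c4431 R * (3 ^_ size s)%:R * z ord0 ord0 ^+ (3 - size s)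
        - (1 ^_ size s)%:R * z ord0 ord0 ^+ (1 - size s) else 0).
Proof.
rewrite /Hmap /= -[X in _ - X]expr1 mderivsB mderivsD mderivsZ !mderivsXn.
exact: evalgen.
Qed.

Lemma ord2 (i : 'I_2) : i = ord0 \/ i = ord_max.
Proof.
case: i => [[|[|m]] H]; [left|right|by []]; exact: val_inj.
Qed.

Lemma c4431_3 (R : realType) : @c4431 R * 3%:R = 132%:R / 31%:R.
Proof. by rewrite /c4431 mulrAC -natrM. Qed.

Lemma jacE (R : realType) (z : 'cV[R[i]]_2) : jacobian (@Hmap R) z = Jexpl z.
Proof.
apply/matrixP => i j; rewrite /jacobian /Jexpl /mx22 !mxE.
case: (ord2 i) => ->; case: (ord2 j) => ->.
- have E := @evalH0 R [:: ord0] z; rewrite /= !ffactn1 in E; by rewrite E /= addr0.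
- have E := @evalH0 R [:: ord_max] z; rewrite /= !ffactn1 in E; rewrite E /=.
  by rewrite add0r c4431_3 expr0 mulr1.
- have E := @evalH1 R [:: ord0] z; rewrite /= !ffactn1 in E; rewrite E /=.
  by rewrite add0r c4431_3 expr0 mulr1.
- have E := @evalH1 R [:: ord_max] z; rewrite /= !ffactn1 in E; rewrite E /=.
  by rewrite addr0.
Qed.

Lemma sum_I2 (R : realType) (F : 'I_2 -> R[i]) : \sum_(j < 2) F j = F ord0 + F ord_max.
Proof.
rewrite big_ord_recl big_ord1.
by congr (_ + F _); apply: val_inj.
Qed.

Lemma all_map_const (k : nat) (js : {ffun 'I_k -> 'I_2}) (a : 'I_2) :
  all (pred1 a) [seq js l | l <- enum 'I_k] = (js == [ffun => a]).
Proof.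
rewrite all_map; apply/allP/eqP => [H|-> l _]; last by rewrite /= ffunE.
by apply/ffunP => l; rewrite ffunE; apply/eqP; apply: (H l); rewrite mem_enum.
Qed.

Lemma sum2 (R : realType) (T : finType) (F : T -> R[i]) (c0 c1 : T) (A B : R[i]) :
  \sum_js ((if js == c0 then A else 0) + (if js == c1 then B else 0)) * F js
  = A * F c0 + B * F c1.
Proof.
under eq_bigr => js _ do rewrite mulrDl.
rewrite big_split /=; congr (_ + _).
- rewrite (bigD1 c0) //= eqxx big1 ?addr0 // => js /negbTE ->; exact: mul0r.
- rewrite (bigD1 c1) //= eqxx big1 ?addr0 // => js /negbTE ->; exact: mul0r.
Qed.

Definition wvec (R : realType) (k : nat) (vs : 'I_k -> 'cV[R[i]]_2) : 'cV[R[i]]_2 :=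
  \col_(a < 2) \prod_(l < k) vs l a ord0.
Arguments wvec {R k}.

Lemma kderivE (R : realType) (z : 'cV[R[i]]_2) (k : nat) (vs : 'I_k -> 'cV[R[i]]_2) :
  (2 <= k)%N ->
  kderiv (@Hmap R) z vs = (k`!)%:R *: (Mk k z *m wvec vs).
Proof.
move=> k2; have f1 : (1 ^_ k = 0)%N by apply: ffact_small.
have P c : \prod_(l < k) vs l ([ffun=> c] l) ord0 = \prod_(l < k) vs l c ord0.
  by apply: eq_bigr => l _; rewrite ffunE.
apply/colP => i; rewrite /kderiv /wvec !mxE sum_I2 !mxE /=.
case: (ord2 i) => ->.
- under eq_bigr => js _ do rewrite evalH0 size_map size_enum_ord !all_map_const.
  rewrite sum2 !P f1 -!bin_ffact !natrM /=.
  ring.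
- under eq_bigr => js _ do rewrite evalH1 size_map size_enum_ord !all_map_const.
  rewrite sum2 !P f1 -!bin_ffact !natrM /=.
  ring.
Qed.



Lemma sumR_I2 {R : realType} (F : 'I_2 -> R) : \sum_(j < 2) F j = F ord0 + F ord_max.
Proof.
rewrite big_ord_recl big_ord1.
by congr (_ + F _); apply: val_inj.
Qed.

Lemma nc_ge0 {R : realType} (x : R[i]) : 0 <= Normc.normc x.
Proof. by case: x => a b; exact: sqrtr_ge0. Qed.

Lemma vnorm2 {R : realType} (v : 'cV[R[i]]_2) :
  vnorm v = Num.sqrt (Normc.normc (v ord0 ord0) ^+ 2 + Normc.normc (v ord_max ord0) ^+ 2).
Proof. by rewrite /vnorm sumR_I2. Qed.

Lemma vnorm_ge0 {R : realType} {n : nat} (v : 'cV[R[i]]_n) : 0 <= vnorm v.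
Proof. exact: sqrtr_ge0. Qed.

Lemma sqrt_le {R : realType} (a c : R) : 0 <= c -> a <= c ^+ 2 -> Num.sqrt a <= c.
Proof.
move=> c0 h; rewrite -[c in _ <= c]ger0_norm // -sqrtr_sqr.
exact: ler_wsqrtr.
Qed.

Lemma sqrt_ge {R : realType} (a c : R) : 0 <= c -> c ^+ 2 <= a -> c <= Num.sqrt a.
Proof.
move=> c0 h; rewrite -[c in c <= _]ger0_norm // -sqrtr_sqr.
exact: ler_wsqrtr.
Qed.

Lemma vnorm0 {R : realType} : vnorm (0 : 'cV[R[i]]_2) = 0.
Proof. by rewrite vnorm2 !mxE Normc.normc0 expr0n /= addr0 sqrtr0. Qed.

Lemma vnorm_eq0 {R : realType} (v : 'cV[R[i]]_2) : vnorm v = 0 -> v = 0.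
Proof.
rewrite vnorm2 => /eqP; rewrite sqrtr_eq0 => h.
have h0 := nc_ge0 (v ord0 ord0); have h1 := nc_ge0 (v ord_max ord0).
have e0 : Normc.normc (v ord0 ord0) = 0 by nra.
have e1 : Normc.normc (v ord_max ord0) = 0 by nra.
apply/colP => i; rewrite mxE; case: (ord2 i) => ->; exact: Normc.eq0_normc.
Qed.

Lemma vnorm_gt0 {R : realType} (v : 'cV[R[i]]_2) : v != 0 -> 0 < vnorm v.
Proof.
move=> nz; rewrite lt_def vnorm_ge0 andbT; apply/eqP => /vnorm_eq0 h.
by rewrite h eqxx in nz.
Qed.

Lemma nc_le_vnorm {R : realType} (v : 'cV[R[i]]_2) (j : 'I_2) :
  Normc.normc (v j ord0) <= vnorm v.
Proof.
rewrite vnorm2; apply: sqrt_ge; first exact: nc_ge0.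
have := sqr_ge0 (Normc.normc (v ord0 ord0)); have := sqr_ge0 (Normc.normc (v ord_max ord0)).
case: (ord2 j) => -> *; lra.
Qed.

Lemma mulmx2 {R : realType} (A : 'M[R[i]]_2) (v : 'cV[R[i]]_2) (i : 'I_2) :
  (A *m v) i ord0 = A i ord0 * v ord0 ord0 + A i ord_max * v ord_max ord0.
Proof. by rewrite mxE sum_I2. Qed.

Definition Kb {R : realType} (A : 'M[R[i]]_2) : R :=
  (Normc.normc (A ord0 ord0) + Normc.normc (A ord0 ord_max)) +
  (Normc.normc (A ord_max ord0) + Normc.normc (A ord_max ord_max)).

Lemma nc_row {R : realType} (A : 'M[R[i]]_2) (v : 'cV[R[i]]_2) (i : 'I_2) :
  Normc.normc ((A *m v) i ord0) <=
  (Normc.normc (A i ord0) + Normc.normc (A i ord_max)) * vnorm v.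
Proof.
rewrite mulmx2; apply: (le_trans (le_normcD _ _)); rewrite !Normc.normcM.
have := nc_le_vnorm v ord0; have := nc_le_vnorm v ord_max.
have := nc_ge0 (A i ord0); have := nc_ge0 (A i ord_max).
have := nc_ge0 (v ord0 ord0); have := nc_ge0 (v ord_max ord0).
move=> *; nra.
Qed.

Lemma vnorm_mul_le {R : realType} (A : 'M[R[i]]_2) (v : 'cV[R[i]]_2) :
  vnorm (A *m v) <= Kb A * vnorm v.
Proof.
rewrite [vnorm (A *m v)]vnorm2 /Kb; apply: sqrt_le.
  apply: mulr_ge0; last exact: vnorm_ge0.
  by rewrite !addr_ge0 ?nc_ge0.
have h0 := nc_row A v ord0; have h1 := nc_row A v ord_max.
have := nc_ge0 ((A *m v) ord0 ord0); have := nc_ge0 ((A *m v) ord_max ord0).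
have := vnorm_ge0 v.
have := nc_ge0 (A ord0 ord0); have := nc_ge0 (A ord0 ord_max).
have := nc_ge0 (A ord_max ord0); have := nc_ge0 (A ord_max ord_max).
move=> *; nra.
Qed.



Lemma sup_le0 {R : realType} (S : set R) (c : R) :
  0 <= c -> (forall y, S y -> y <= c) -> sup S <= c.
Proof.
move=> c0 H; case: (pselect (S !=set0)%classic) => [ne|e].
  by apply: ge_sup => // y /H.
have -> : S = set0.
  by apply/seteqP; split => y // Sy; exfalso; apply: e; exists y.
by rewrite sup0.
Qed.

Lemma one_neq0 {R : realType} : (const_mx 1 : 'cV[R[i]]_2) != 0.
Proof.
apply/eqP => /matrixP/(_ ord0 ord0); rewrite !mxE => /eqP; apply/negP.
exact: oner_neq0.
Qed.

Lemma sigma_hasub {R : realType} (A : 'M[R[i]]_2) :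
  has_ubound [set r | exists v : 'cV[R[i]]_2, v != 0 /\ r = vnorm (A *m v) / vnorm v].
Proof.
exists (Kb A) => r [v [nz ->]].
by rewrite ler_pdivrMr ?vnorm_gt0 // vnorm_mul_le.
Qed.

Lemma sigma_ge0 {R : realType} (A : 'M[R[i]]_2) : 0 <= sigma A.
Proof.
apply: le_trans (ub_le_sup (sigma_hasub A) _).
  2: by exists (const_mx 1); split; [exact: one_neq0|].
by rewrite divr_ge0 ?vnorm_ge0.
Qed.

Lemma sigma_ub {R : realType} (A : 'M[R[i]]_2) (v : 'cV[R[i]]_2) :
  vnorm (A *m v) <= sigma A * vnorm v.
Proof.
have [->|nz] := eqVneq v 0; first by rewrite mulmx0 vnorm0 mulr0.
rewrite -ler_pdivrMr ?vnorm_gt0 //.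
by apply: (ub_le_sup (sigma_hasub A)); exists v.
Qed.

Lemma sigma0 {R : realType} : sigma (0 : 'M[R[i]]_2) <= 0.
Proof.
apply: sup_le0 => // r [v [nz ->]].
by rewrite mul0mx vnorm0 mul0r.
Qed.

Lemma prod_add {R : realType} (k : nat) (x y : 'I_k.+1 -> R) :
  (forall l, 0 <= x l) -> (forall l, 0 <= y l) ->
  \prod_l x l + \prod_l y l <= \prod_l (x l + y l).
Proof.
elim: k x y => [|k IH] x y hx hy; first by rewrite !big_ord1.
rewrite !(big_ord_recr k.+1) /=.
have := IH (fun l => x (widen_ord (leqnSn _) l)) (fun l => y (widen_ord (leqnSn _) l)).
move=> /(_ (fun l => hx _) (fun l => hy _)) h.
have hX : 0 <= \prod_(i < k.+1) x (widen_ord (leqnSn k.+1) i) by apply: prodr_ge0.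
have hY : 0 <= \prod_(i < k.+1) y (widen_ord (leqnSn k.+1) i) by apply: prodr_ge0.
have := hx ord_max; have := hy ord_max; move=> *; nra.
Qed.

Lemma vnorm_w {R : realType} (k : nat) (vs : 'I_k -> 'cV[R[i]]_2) : (0 < k)%N ->
  vnorm (wvec vs) <= \prod_l vnorm (vs l).
Proof.
case: k vs => // k vs _.
rewrite vnorm2 /wvec !mxE; apply: sqrt_le; first by apply: prodr_ge0 => l _; exact: vnorm_ge0.
rewrite !(big_morph _ (@Normc.normcM R) (@Normc.normc1 R)) -!prodrXl.
under [X in _ <= X]eq_bigr => l _ do rewrite vnorm2 sqr_sqrtr ?addr_ge0 ?sqr_ge0 //.
apply: prod_add => l; exact: sqr_ge0.
Qed.

Lemma mlnorm_le {R : realType} (z : 'cV[R[i]]_2) (k : nat) : (2 <= k)%N ->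
  mlnorm (fun vs : 'I_k -> 'cV[R[i]]_2 =>
    ((k`!)%:R : R[i])^-1 *: (invmx (jacobian (@Hmap R) z) *m kderiv (@Hmap R) z vs))
  <= sigma (invmx (Jexpl z) *m Mk k z).
Proof.
move=> k2; apply: sup_le0; first exact: sigma_ge0.
move=> r [vs [nz ->]].
have pos : 0 < \prod_l vnorm (vs l).
  by apply: prodr_gt0 => l _; apply: vnorm_gt0.
rewrite ler_pdivrMr // jacE kderivE // -scalemxAr scalerA mulVf ?scale1r.
  2: by rewrite pnatr_eq0 -lt0n fact_gt0.
rewrite mulmxA; apply: (le_trans (sigma_ub _ _)).
apply: ler_wpM2l; first exact: sigma_ge0.
by apply: vnorm_w; apply: leq_trans k2.
Qed.



Lemma bern {R : realType} (b d : R) (m : nat) : 0 <= d -> d <= b ->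
  b ^+ m.+1 - (m.+1)%:R * b ^+ m * d <= (b - d) ^+ m.+1.
Proof.
move=> d0 db; elim: m => [|m IH]; first by rewrite expr1 expr0 mulr1 mul1r.
rewrite exprS [(b - d) ^+ _]exprS.
have h1 : 0 <= b - d by lra.
have h2 := ler_wpM2l h1 IH.
have hb : 0 <= b by lra.
have hbm : 0 <= b ^+ m by apply: exprn_ge0.
apply: le_trans h2.
rewrite -[(m.+2)%:R](natrD _ 1 m.+1) exprS.
set M := (m.+1)%:R : R; set B := b ^+ m.
have hM : 0 <= M by rewrite /M ler0n.
have : 0 <= M * B * d * d by rewrite !mulr_ge0.
rewrite natrD -/M; nra.
Qed.

Lemma nroot_le {R : realType} (m : nat) (x c : R) : 0 <= c ->
  (forall y, 0 <= y -> y ^+ m <= x -> y <= c) -> nroot m x <= c.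
Proof. move=> c0 H; apply: sup_le0 => // y [y0 hy]; exact: H. Qed.

Lemma nroot_gap {R : realType} (n : nat) (x b : R) : 0 < b -> x < b ^+ n.+1 ->
  exists c, 0 <= c /\ c < b /\ nroot n.+1 x <= c.
Proof.
move=> b0 xb.
set x' := Num.max x 0.
have x'0 : 0 <= x' by rewrite le_max lexx orbT.
have xx' : x <= x' by rewrite le_max lexx.
have bn0 : 0 < b ^+ n by apply: exprn_gt0.
have bm : b ^+ n.+1 = b * b ^+ n by rewrite exprS.
have x'b : x' < b ^+ n.+1 by rewrite gt_max xb /= exprn_gt0.
set t := (b ^+ n.+1 - x') / 2.
set u := (n.+1)%:R * b ^+ n.
have u0 : 0 < u by rewrite mulr_gt0 // ltr0n.
have t0 : 0 < t by rewrite divr_gt0 // subr_gt0.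
set d := t / u.
have d0 : 0 < d by rewrite divr_gt0.
have ud : u * d = t by rewrite /d mulrC divfK // gt_eqF.
have ub : b ^+ n <= u.
  rewrite /u -[X in X <= _]mul1r; apply: ler_wpM2r; [exact: ltW | by rewrite ler1n].
have db : d <= b / 2.
  rewrite /d ler_pdivrMr // /t.
  have : b ^+ n.+1 - x' <= b * u by nra.
  move=> h; lra.
exists (b - d); split; first lra; split; first lra.
have hbd : d <= b by lra.
have hc := bern b d n (ltW d0) hbd.
rewrite -/u ud /t in hc.
apply: nroot_le; first lra.
move=> y y0 hy; rewrite leNgt; apply/negP => cy.
have : (b - d) ^+ n.+1 <= y ^+ n.+1.
  by apply: lerXn2r; rewrite ?nnegrE ?ltW //; lra.
lra.
Qed.



Lemma Mk_big {R : realType} (z : 'cV[R[i]]_2) (k : nat) : (6 < k)%N -> Mk k z = 0.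
Proof.
move=> k6; have k3 : (3 < k)%N by apply: leq_trans k6.
apply/matrixP => i j; rewrite /Mk /mx22 !mxE !bin_small // !mulr0 !mul0r.
by case: ifP; case: ifP.
Qed.

Lemma nroot_nonpos {R : realType} (m : nat) (x : R) : (0 < m)%N -> x <= 0 -> nroot m x <= 0.
Proof.
move=> m0 x0; apply: nroot_le => // y y0 hy.
have : y ^+ m = 0 by apply/eqP; rewrite eq_le (le_trans hy x0) exprn_ge0.
by move/eqP; rewrite expf_eq0 m0 /= => /eqP ->.
Qed.

Theorem proposition5p1 (R : realType) (z : 'cV[R[i]]_2) :
  Jexpl z \in unitmx ->
  (forall k : nat, (2 <= k <= 6)%N ->
     sigma (invmx (Jexpl z) *m Mk k z)
       < (3%:R / 100%:R / vnorm (invmx (Jexpl z) *m peval (@Hmap R) z)) ^+ k.-1) ->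
  alpha (@Hmap R) z < 3%:R / 100%:R.
Proof.
move=> hJ H.
set be := vnorm (invmx (Jexpl z) *m peval (@Hmap R) z) in H.
set b := 3%:R / 100%:R / be in H.
have b0 : 0 < b.
  have := H 2%N isT; rewrite /= expr1 => h. have := sigma_ge0 (invmx (Jexpl z) *m Mk 2 z). lra.
have be0 : 0 < be.
  rewrite lt_def vnorm_ge0 andbT; apply/eqP => e.
  by move: b0; rewrite /b e invr0 mulr0 ltxx.
have Hk : forall k, (2 <= k <= 6)%N -> exists c : R, 0 <= c /\ c < b /\
    nroot k.-1 (mlnorm (fun vs : 'I_k -> 'cV[R[i]]_2 =>
      ((k`!)%:R : R[i])^-1 *: (invmx (jacobian (@Hmap R) z) *m kderiv (@Hmap R) z vs))) <= c.
  move=> k hk; have h := H k hk.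
  case: k hk h => [|[|k]] // hk h /=.
  apply: nroot_gap => //.
  have := mlnorm_le z k.+2 isT. lra.
have [c2 [c20 [c2b h2]]] := Hk 2%N isT.
have [c3 [c30 [c3b h3]]] := Hk 3%N isT.
have [c4 [c40 [c4b h4]]] := Hk 4%N isT.
have [c5 [c50 [c5b h5]]] := Hk 5%N isT.
have [c6 [c60 [c6b h6]]] := Hk 6%N isT.
set C := Num.max c2 (Num.max c3 (Num.max c4 (Num.max c5 c6))).
have C0 : 0 <= C by rewrite !le_max c20.
have Cb : C < b by rewrite !gt_max c2b c3b c4b c5b c6b.
have gC : gamma (@Hmap R) z <= C.
  apply: sup_le0 => // g [k [k2 ->]].
  case: k k2 => [|[|[|[|[|[|[|k]]]]]]] // k2.
  - have m2 : c2 <= C by rewrite !le_max lexx.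
    first [ lra | exact: (Order.POrderTheory.le_trans h2 m2) | exact: (Order.PreorderTheory.le_trans h2 m2) | exact: (ler_trans h2 m2)].
  - have m3 : c3 <= C by rewrite !le_max lexx ?orbT.
    first [ lra | exact: (Order.POrderTheory.le_trans h3 m3) | exact: (Order.PreorderTheory.le_trans h3 m3) | exact: (ler_trans h3 m3)].
  - have m4 : c4 <= C by rewrite !le_max lexx ?orbT.
    first [ lra | exact: (Order.POrderTheory.le_trans h4 m4) | exact: (Order.PreorderTheory.le_trans h4 m4) | exact: (ler_trans h4 m4)].
  - have m5 : c5 <= C by rewrite !le_max lexx ?orbT.
    first [ lra | exact: (Order.POrderTheory.le_trans h5 m5) | exact: (Order.PreorderTheory.le_trans h5 m5) | exact: (ler_trans h5 m5)].
  - have m6 : c6 <= C by rewrite !le_max lexx ?orbT.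
    first [ lra | exact: (Order.POrderTheory.le_trans h6 m6) | exact: (Order.PreorderTheory.le_trans h6 m6) | exact: (ler_trans h6 m6)].
  - apply: le_trans C0; apply: nroot_nonpos => //.
    have h := mlnorm_le z k.+4.+3 isT.
    rewrite Mk_big // mulmx0 in h.
    have h0 := @sigma0 R. lra.
rewrite /alpha /beta jacE -/be.
apply: (le_lt_trans (ler_wpM2l (ltW be0) gC)).
have -> : 3%:R / 100%:R = be * b by rewrite /b [be * _]mulrC divfK // gt_eqF.
by rewrite ltr_pM2l.
Qed.
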